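(* For $\kappa\in(8/3,8)$, the function $\gamma_\kappa$ is strictly convex on $[0,\infty)$.
   Context: $\Lambda_\kappa(\lambda)=\log\big(-\cos(4\pi/\kappa)/\cos(\pi\sqrt{(1-4/\kappa)^2+8\lambda/\kappa})\big)$ for $\lambda<1-\frac2\kappa-\frac{3\kappa}{32}$ (with $\cos(\pi\sqrt{\cdot})=\cosh(\pi\sqrt{-\cdot})$ for negative argument) and $+\infty$ otherwise; $\Lambda_\kappa^\star(x)=\sup_\lambda(\lambda x-\Lambda_\kappa(\lambda))$; $\gamma_\kappa(\nu)=\nu\Lambda_\kappa^\star(1/\nu)$ for $\nu>0$ and $\gamma_\kappa(0)=1-\frac2\kappa-\frac{3\kappa}{32}$. *)

(* Defs.v *)
From Stdlib Require Import Reals Lra Classical ClassicalEpsilon.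
Open Scope R_scope.

Definition cos_pi_sqrt (u : R) : R :=
  if Rle_dec 0 u then cos (PI * sqrt u) else cosh (PI * sqrt (- u)).

(* threshold: Lambda_kappa is finite exactly for lambda < lam0 kappa *)
Definition lam0 (k : R) : R := 1 - 2 / k - 3 * k / 32.

(* finite branch of Lambda_kappa (only meaningful for l < lam0 k; +infinity otherwise) *)
Definition Lambda (k l : R) : R :=
  ln (- cos (4 * PI / k) / cos_pi_sqrt ((1 - 4 / k) ^ 2 + 8 * l / k)).

(* the set { l x - Lambda(l) : l in the effective domain of Lambda };
   values l >= lam0 k contribute -infinity and do not affect the sup *)
Definition LStar_set (k x : R) : R -> Prop :=
  fun y => exists l, l < lam0 k /\ y = l * x - Lambda k l.

(* Legendre transform Lambda^*_kappa(x) = sup_l (l x - Lambda(l)), as a real number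
   when the sup is finite (the least upper bound); default 0 if it is +infinity
   (this never happens for x > 0, the only arguments used below). *)
Definition LambdaStar (k x : R) : R :=
  match excluded_middle_informative (exists m, is_lub (LStar_set k x) m) with
  | left H => proj1_sig (constructive_indefinite_description _ H)
  | right _ => 0
  end.

Definition gamma (k nu : R) : R :=
  if Rlt_dec 0 nu then nu * LambdaStar k (1 / nu) else lam0 k.

(* Main.v *)
Require Import Defs.
From Stdlib Require Import Reals Lra Classical ClassicalEpsilon.
From Coquelicot Require Import Coquelicot.
Open Scope R_scope.


Definition AA (k : R) := - cos (4 * PI / k).
Definition U (k l : R) := (1 - 4 / k) ^ 2 + 8 * l / k.

Lemma U_eq k l : 0 < k -> U k l = 1/4 + (8 / k) * (l - lam0 k).
Proof. intros; unfold U, lam0; field; lra. Qed.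

Lemma U_diff k l m : 0 < k -> U k l - U k m = (8 / k) * (l - m).
Proof. intros; unfold U; field; lra. Qed.

Lemma Lambda_eq k l : Lambda k l = ln (AA k / cos_pi_sqrt (U k l)).
Proof. reflexivity. Qed.

Lemma AA_pos k : 8/3 < k < 8 -> 0 < AA k.
Proof.
  intros [h1 h2]. unfold AA.
  assert (hr : (4 / k) * k = 4) by (field; lra).
  set (r := 4 / k) in *.
  assert (r1 : 1/2 < r) by nra. assert (r2 : r < 3/2) by nra.
  assert (e : 4 * PI / k = PI * r) by (unfold r; field; lra).
  rewrite e. pose proof PI_RGT_0.
  assert (cos (PI * r) < 0) by (apply cos_lt_0; nra). lra.
Qed.

Lemma cps_nonneg u : 0 <= u -> cos_pi_sqrt u = cos (PI * sqrt u).
Proof. intros h; unfold cos_pi_sqrt; destruct (Rle_dec 0 u); [reflexivity|lra]. Qed.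

Lemma cps_neg u : u < 0 -> cos_pi_sqrt u = cosh (PI * sqrt (- u)).
Proof. intros h; unfold cos_pi_sqrt; destruct (Rle_dec 0 u); [lra|reflexivity]. Qed.

Lemma cps_0 : cos_pi_sqrt 0 = 1.
Proof. rewrite cps_nonneg by lra. rewrite sqrt_0, Rmult_0_r; apply cos_0. Qed.

Lemma sqrt_half u : 0 <= u -> u < 1/4 -> sqrt u < 1/2.
Proof.
  intros h1 h2. pose proof (sqrt_sqrt u h1). pose proof (sqrt_pos u). nra.
Qed.

Lemma cosh_pos y : 0 < cosh y.
Proof. unfold cosh. pose proof (exp_pos y). pose proof (exp_pos (-y)). lra. Qed.

Lemma cps_pos u : u < 1/4 -> 0 < cos_pi_sqrt u.
Proof.
  intros h. destruct (Rle_dec 0 u) as [h0|h0].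
  - rewrite cps_nonneg by lra. pose proof (sqrt_half u h0 h). pose proof (sqrt_pos u).
    pose proof PI_RGT_0. apply cos_gt_0; nra.
  - rewrite cps_neg by lra. apply cosh_pos.
Qed.

Lemma cosh_ge1 y : 1 <= cosh y.
Proof. unfold cosh. pose proof (exp_ineq1_le y). pose proof (exp_ineq1_le (-y)). lra. Qed.

Lemma sinh_ge t : 0 <= t -> t <= sinh t.
Proof.
  intros h. destruct (Req_dec t 0) as [->|ht].
  - unfold sinh. rewrite Ropp_0, exp_0. lra.
  - destruct (MVT_cor2 sinh cosh 0 t) as [c [Hc _]]; [lra| intros; apply derivable_pt_lim_sinh |].
    assert (sinh 0 = 0) by (unfold sinh; rewrite Ropp_0, exp_0; lra).
    pose proof (cosh_ge1 c). nra.
Qed.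

Lemma cosh_ge y : 0 <= y -> 1 + y * y / 2 <= cosh y.
Proof.
  intros h. pose proof (sinh_ge (y/2)).
  assert (e1 : exp y = exp (y/2) * exp (y/2)) by (rewrite <- exp_plus; f_equal; lra).
  assert (e2 : exp (-y) = exp (-(y/2)) * exp (-(y/2))) by (rewrite <- exp_plus; f_equal; lra).
  assert (e3 : exp (y/2) * exp (-(y/2)) = 1) by (rewrite <- exp_plus; replace (y/2 + -(y/2)) with 0 by lra; apply exp_0).
  unfold cosh. rewrite e1, e2. unfold sinh in H.
  assert (y/2 <= (exp (y / 2) - exp (- (y / 2))) / 2) by (apply H; lra).
  nra.
Qed.

Lemma cosh_le_exp y : 0 <= y -> cosh y <= exp y.
Proof.
  intros h. unfold cosh. destruct (Req_dec y 0) as [->|hy].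
  - rewrite Ropp_0, exp_0; lra.
  - assert (exp (-y) < exp y) by (apply exp_increasing; lra). lra.
Qed.

Lemma cps_lower u : u < 1/4 -> 1 - PI ^ 2 * u / 2 <= cos_pi_sqrt u.
Proof.
  intros h. pose proof PI_RGT_0. destruct (Rle_dec 0 u) as [h0|h0].
  - rewrite cps_nonneg by lra. pose proof (sqrt_half u h0 h). pose proof (sqrt_pos u).
    pose proof (sqrt_sqrt u h0).
    destruct (cos_bound (PI * sqrt u) 0) as [hb _]; try nra.
    unfold cos_approx, cos_term in hb. simpl in hb. nra.
  - rewrite cps_neg by lra. assert (h1 : 0 <= - u) by lra.
    pose proof (sqrt_sqrt _ h1). pose proof (sqrt_pos (-u)).
    pose proof (cosh_ge (PI * sqrt (-u))). nra.
Qed.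

Lemma sin_le_x t : 0 <= t -> sin t <= t.
Proof.
  intros h. destruct (Req_dec t 0) as [->|ht]. { rewrite sin_0; lra. }
  destruct (MVT_cor2 sin cos 0 t) as [c [Hc _]]; [lra| intros; apply derivable_pt_lim_sin |].
  rewrite sin_0 in Hc. pose proof (COS_bound c). nra.
Qed.


Lemma cont_eps f x : (forall e, 0<e -> exists d, 0<d /\ forall y, Rabs (y - x) < d -> Rabs (f y - f x) < e) -> continuity_pt f x.
Proof.
  intros H. unfold continuity_pt, continue_in, limit1_in, limit_in. simpl. unfold R_dist.
  intros e he. destruct (H e he) as [d [hd Hd]]. exists d; split; [lra|].
  intros y [_ hy]. apply Hd, hy.
Qed.

Lemma eps_cont f x : continuity_pt f x -> forall e, 0<e -> exists d, 0<d /\ forall y, Rabs (y - x) < d -> Rabs (f y - f x) < e.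
Proof.
  unfold continuity_pt, continue_in, limit1_in, limit_in. simpl. unfold R_dist, D_x, no_cond.
  intros H e he. destruct (H e he) as [d [hd Hd]]. exists d; split; [lra|].
  intros y hy. destruct (Req_dec x y) as [->|hne].
  - rewrite Rminus_eq_0, Rabs_R0; lra.
  - apply Hd; auto.
Qed.

Definition g1 (v : R) := cos (PI * sqrt v).
Definition g2 (v : R) := cosh (PI * sqrt (- v)).

Lemma g1_cont v : 0 <= v -> continuity_pt g1 v.
Proof.
  intros h. apply continuity_pt_filterlim. unfold g1.
  apply (continuous_cos_comp (fun x => PI * sqrt x)). apply (continuous_mult (fun _ => PI) sqrt). apply continuous_const.
  apply continuity_pt_filterlim, continuity_pt_sqrt, h.
Qed.

Lemma cosh_cont y : continuous cosh y.
Proof. apply (@ex_derive_continuous R_AbsRing R_NormedModule). exists (sinh y). apply is_derive_Reals, derivable_pt_lim_cosh. Qed.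

Lemma g2_cont v : v <= 0 -> continuity_pt g2 v.
Proof.
  intros h. apply continuity_pt_filterlim. unfold g2.
  apply (continuous_comp (fun v => PI * sqrt (-v)) cosh); [|apply cosh_cont].
  apply (continuous_mult (fun _ => PI) (fun v => sqrt (-v))). apply continuous_const.
  apply (continuous_comp Ropp sqrt). apply (@ex_derive_continuous R_AbsRing R_NormedModule); auto_derive; auto.
  apply continuity_pt_filterlim, continuity_pt_sqrt. lra.
Qed.

Lemma cps_cont u : continuity_pt cos_pi_sqrt u.
Proof.
  apply cont_eps. intros e he.
  destruct (Rlt_le_dec 0 u) as [hp|hn].
  - destruct (eps_cont _ _ (g1_cont u (Rlt_le _ _ hp)) e he) as [d [hd Hd]].
    exists (Rmin d u); split. { apply Rmin_pos; lra. }
    intros y hy. pose proof (Rmin_l d u). pose proof (Rmin_r d u).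
    assert (0 <= y) by (apply Rabs_def2 in hy; lra).
    rewrite !cps_nonneg by lra. apply (Hd y). lra.
  - destruct (Rlt_le_dec u 0) as [hn'|hz].
    + destruct (eps_cont _ _ (g2_cont u (Rlt_le _ _ hn')) e he) as [d [hd Hd]].
      exists (Rmin d (-u)); split. { apply Rmin_pos; lra. }
      intros y hy. pose proof (Rmin_l d (-u)). pose proof (Rmin_r d (-u)).
      assert (y < 0) by (apply Rabs_def2 in hy; lra).
      rewrite !cps_neg by lra. apply (Hd y). lra.
    + assert (u = 0) by lra. subst u.
      destruct (eps_cont _ _ (g1_cont 0 (Rle_refl _)) e he) as [d1 [hd1 Hd1]].
      destruct (eps_cont _ _ (g2_cont 0 (Rle_refl _)) e he) as [d2 [hd2 Hd2]].
      exists (Rmin d1 d2); split. { apply Rmin_pos; lra. }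
      intros y hy. pose proof (Rmin_l d1 d2). pose proof (Rmin_r d1 d2).
      rewrite cps_0.
      assert (E1 : g1 0 = 1) by (unfold g1; rewrite sqrt_0, Rmult_0_r; apply cos_0).
      assert (E2 : g2 0 = 1) by (unfold g2; rewrite Ropp_0, sqrt_0, Rmult_0_r; unfold cosh; rewrite ?Ropp_0, exp_0; field).
      destruct (Rle_dec 0 y) as [hy0|hy0].
      * rewrite cps_nonneg by lra. specialize (Hd1 y ltac:(lra)). rewrite E1 in Hd1. exact Hd1.
      * rewrite cps_neg by lra. specialize (Hd2 y ltac:(lra)). rewrite E2 in Hd2. exact Hd2.
Qed.

Lemma Lambda_cont k l : 8/3 < k < 8 -> l < lam0 k -> continuous (Lambda k) l.
Proof.
  intros hk hl. pose proof (AA_pos k hk).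
  assert (hu : U k l < 1/4) by (rewrite U_eq by lra; assert (0 < 8/k) by (apply Rdiv_lt_0_compat; lra); nra).
  pose proof (cps_pos _ hu).
  unfold Lambda.
  apply (continuous_comp (fun l => - cos (4 * PI / k) / cos_pi_sqrt ((1 - 4 / k) ^ 2 + 8 * l / k)) ln).
  - unfold Rdiv at 2. apply (continuous_mult (fun _ => - cos (4 * PI / k)) (fun l => / cos_pi_sqrt ((1 - 4 / k) ^ 2 + 8 * l / k))). apply continuous_const.
    apply continuous_Rinv_comp.
    + apply (continuous_comp (fun l => (1 - 4 / k) ^ 2 + 8 * l / k) cos_pi_sqrt).
      * apply (@ex_derive_continuous R_AbsRing R_NormedModule). auto_derive. auto.
      * apply continuity_pt_filterlim, cps_cont.
    + fold (U k l). lra.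
  - apply continuous_ln. fold (U k l). fold (AA k). apply Rdiv_lt_0_compat; lra.
Qed.


Lemma gen_max (h : R -> R) c a b d : a < c < b -> derivable_pt_lim h c d ->
  (forall y, a < y < b -> h y <= h c) -> d = 0.
Proof.
  intros [h1 h2] Hd Hm.
  pose proof (deriv_maximum h a b c (exist _ d Hd) h1 h2 (fun y p q => Hm y (conj p q))).
  exact H.
Qed.

Lemma lin_deriv (psi : R -> R) m x d : derivable_pt_lim psi m d ->
  derivable_pt_lim (fun l => l * x - psi l) m (x - d).
Proof.
  intros H. apply is_derive_Reals. apply is_derive_Reals in H.
  assert (H1 : is_derive (fun l => l * x) m x) by (auto_derive; [auto|ring]).
  apply (is_derive_minus (fun l => l * x) psi m x d); auto.
Qed.

Lemma exd f x : ex_derive f x -> exists d, derivable_pt_lim f x d.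
Proof. intros [d H]. exists d. apply is_derive_Reals, H. Qed.

Lemma kfacts k : 8/3 < k < 8 -> 0 < 8 / k /\ (8 / k) * (k / 8) = 1.
Proof. intros. split. apply Rdiv_lt_0_compat; lra. field; lra. Qed.

Lemma lt_lam0_U k l : 8/3 < k < 8 -> l < lam0 k -> U k l < 1/4.
Proof. intros hk hl. destruct (kfacts k hk). rewrite U_eq by lra. nra. Qed.

Lemma exU k m : 0 < k -> ex_derive (U k) m.
Proof. intros. unfold U. auto_derive. lra. Qed.
Lemma exG1 a v : 0 < a -> v < 0 -> ex_derive (fun v => ln (a / cosh (PI * sqrt (- v)))) v.
Proof. intros. pose proof (cosh_pos (PI * sqrt (- v))). unfold cosh in *. auto_derive.
  repeat split; try lra. apply Rmult_lt_0_compat; [lra|apply Rinv_0_lt_compat; lra]. Qed.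
Lemma exG2 a v : 0 < a -> 0 < v -> 0 < cos (PI * sqrt v) -> ex_derive (fun v => ln (a / cos (PI * sqrt v))) v.
Proof. intros. auto_derive. repeat split; try lra. apply Rmult_lt_0_compat; [lra|apply Rinv_0_lt_compat; lra]. Qed.
Lemma exG3 a v : 0 < a -> 0 < 1 - PI^2 * v / 2  -> ex_derive (fun v => ln (a / (1 - PI ^ 2 * v / 2))) v.
Proof. intros. auto_derive.
  assert (E: 1 + - (PI * (PI * 1) * v * / 2) = 1 - PI ^ 2 * v / 2) by (simpl; field).
  rewrite E. repeat split; try lra. apply Rmult_lt_0_compat; [lra|apply Rinv_0_lt_compat; lra]. Qed.
Lemma excomp (G : R -> R) k m : 0 < k -> ex_derive G (U k m) -> ex_derive (fun l => G (U k l)) m.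
Proof. intros. apply (ex_derive_comp G (U k)); auto. apply exU; auto. Qed.

Lemma psi_exists k m : 8/3 < k < 8 -> m < lam0 k ->
  exists (psi : R -> R) d dl, 0 < dl /\
    (forall l, Rabs (l - m) < dl -> l < lam0 k /\ Lambda k l <= psi l) /\
    Lambda k m = psi m /\ derivable_pt_lim psi m d.
Proof.
  intros hk hm. destruct (kfacts k hk) as [k8 k8'].
  pose proof (AA_pos k hk) as hA. pose proof PI_RGT_0 as hPI.
  pose proof (lt_lam0_U k m hk hm) as hUm.
  assert (hUd : forall l, U k l = U k m + (8/k) * (l - m)).
  { intros l. pose proof (U_diff k l m ltac:(lra)). lra. }
  destruct (Rtotal_order (U k m) 0) as [hneg | [hz | hpos]].
  -
    exists (fun l => ln (AA k / cosh (PI * sqrt (- U k l)))).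
    assert (hex : ex_derive (fun l => ln (AA k / cosh (PI * sqrt (- U k l)))) m).
    { apply (excomp (fun v => ln (AA k / cosh (PI * sqrt (- v))))); [lra|]. apply exG1; lra. }
    destruct (exd _ _ hex) as [d hd]. exists d.
    exists (Rmin (lam0 k - m) ((k/8) * (- U k m))). split.
    { apply Rmin_pos; [lra| apply Rmult_lt_0_compat; lra]. }
    split; [|split; [rewrite Lambda_eq, cps_neg by lra; reflexivity | exact hd]].
    intros l hl. pose proof (Rmin_l (lam0 k - m) ((k/8) * (- U k m))).
    pose proof (Rmin_r (lam0 k - m) ((k/8) * (- U k m))).
    apply Rabs_def2 in hl. destruct hl as [hl1 hl2].
    assert (U k l < 0).
    { rewrite hUd. assert ((8/k) * (l - m) < (8/k) * ((k/8) * (- U k m))) by (apply Rmult_lt_compat_l; lra). nra. }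
    split; [lra|]. rewrite Lambda_eq, cps_neg by lra. lra.
  -
    exists (fun l => ln (AA k / (1 - PI ^ 2 * U k l / 2))).
    assert (hex : ex_derive (fun l => ln (AA k / (1 - PI ^ 2 * U k l / 2))) m).
    { apply (excomp (fun v => ln (AA k / (1 - PI ^ 2 * v / 2)))); [lra|]. apply exG3; [lra|]. rewrite hz; lra. }
    destruct (exd _ _ hex) as [d hd]. exists d.
    exists (Rmin (lam0 k - m) (k/64)). split.
    { apply Rmin_pos; lra. }
    split; [|split; [rewrite Lambda_eq, hz, cps_0; f_equal; field | exact hd]].
    intros l hl. pose proof (Rmin_l (lam0 k - m) (k/64)).
    pose proof (Rmin_r (lam0 k - m) (k/64)).
    apply Rabs_def2 in hl. destruct hl as [hl1 hl2].
    assert (hl' : l < lam0 k) by lra.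
    pose proof (lt_lam0_U k l hk hl').
    assert (U k l < 1/8).
    { rewrite hUd, hz. assert ((8/k) * (l - m) < (8/k) * (k/64)) by (apply Rmult_lt_compat_l; lra).
      assert ((8/k) * (k/64) = 1/8) by (field; lra). lra. }
    pose proof PI_4.
    assert (hpos : 0 < 1 - PI ^ 2 * U k l / 2).
    { assert (PI * PI <= 16) by nra. destruct (Rle_dec 0 (U k l)); simpl; nra. }
    pose proof (cps_lower (U k l) ltac:(lra)).
    split; [lra|]. rewrite Lambda_eq. apply ln_le.
    + apply Rdiv_lt_0_compat; [lra| apply cps_pos; lra].
    + unfold Rdiv. apply Rmult_le_compat_l; [lra|]. apply Rinv_le_contravar; lra.
  -
    exists (fun l => ln (AA k / cos (PI * sqrt (U k l)))).
    assert (hex : ex_derive (fun l => ln (AA k / cos (PI * sqrt (U k l)))) m).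
    { pose proof (cps_pos _ hUm). rewrite cps_nonneg in H by lra.
      apply (excomp (fun v => ln (AA k / cos (PI * sqrt v)))); [lra|]. apply exG2; lra. }
    destruct (exd _ _ hex) as [d hd]. exists d.
    exists (Rmin (lam0 k - m) ((k/8) * (U k m))). split.
    { apply Rmin_pos; [lra| apply Rmult_lt_0_compat; lra]. }
    split; [|split; [rewrite Lambda_eq, cps_nonneg by lra; reflexivity | exact hd]].
    intros l hl. pose proof (Rmin_l (lam0 k - m) ((k/8) * (U k m))).
    pose proof (Rmin_r (lam0 k - m) ((k/8) * (U k m))).
    apply Rabs_def2 in hl. destruct hl as [hl1 hl2].
    assert (0 < U k l).
    { rewrite hUd. assert ((8/k) * (m - l) < (8/k) * ((k/8) * (U k m))) by (apply Rmult_lt_compat_l; lra). nra. }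
    split; [lra|]. rewrite Lambda_eq, cps_nonneg by lra. lra.
Qed.

Definition IsMax k x m := m < lam0 k /\ forall l, l < lam0 k -> l * x - Lambda k l <= m * x - Lambda k m.

Lemma no_double k x y m : 8/3 < k < 8 -> IsMax k x m -> IsMax k y m -> x = y.
Proof.
  intros hk [hm Hx] [_ Hy].
  destruct (psi_exists k m hk hm) as [psi [d [dl [hdl [Hb [He Hd]]]]]].
  assert (forall z, (forall l, l < lam0 k -> l * z - Lambda k l <= m * z - Lambda k m) -> z = d).
  { intros z Hz. assert (z - d = 0); [|lra].
    apply (gen_max (fun l => l * z - psi l) m (m - dl) (m + dl)); [lra| apply lin_deriv, Hd|].
    intros l hl. assert (h : Rabs (l - m) < dl) by (apply Rabs_def1; lra).
    destruct (Hb l h) as [hl1 hl2]. specialize (Hz l hl1). lra. }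
  rewrite (H x Hx), (H y Hy). reflexivity.
Qed.


Lemma H_cont k x c : 8/3 < k < 8 -> c < lam0 k -> continuity_pt (fun l => l * x - Lambda k l) c.
Proof.
  intros hk hc. apply (continuity_pt_minus (fun l => l * x) (Lambda k) c).
  - apply continuity_pt_filterlim. apply (@ex_derive_continuous R_AbsRing R_NormedModule (fun l => l * x) c).
    auto_derive; auto.
  - apply continuity_pt_filterlim. apply Lambda_cont; auto.
Qed.

Lemma U_l0 k l : 0 < k -> U k l = (8 / k) * (l - (lam0 k - k / 32)).
Proof. intros; unfold U, lam0; field; lra. Qed.

Lemma attain k x : 8/3 < k < 8 -> 0 < x -> exists m, IsMax k x m.
Proof.
  intros hk hx. destruct (kfacts k hk) as [k8 k8'].
  pose proof (AA_pos k hk) as hA. pose proof PI_RGT_0 as hPI.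
  set (l0 := lam0 k - k / 32).
  assert (hl0 : l0 < lam0 k) by (unfold l0; lra).
  set (H := fun l => l * x - Lambda k l).
  assert (HL0 : Lambda k l0 = ln (AA k)).
  { rewrite Lambda_eq, U_l0 by lra. fold l0. rewrite Rminus_eq_0, Rmult_0_r, cps_0.
    f_equal; field. }
  set (K := lam0 k * x - H l0).
  set (eps := AA k * exp (- K)).
  assert (heps : 0 < eps) by (unfold eps; pose proof (exp_pos (-K)); nra).
  set (w := eps * k / (16 * PI)).
  assert (hw : 0 < w) by (unfold w; apply Rdiv_lt_0_compat; nra).
  assert (hw' : (8 / k) * w * (2 * PI) = eps) by (unfold w; field; lra).
  set (q := Rmax l0 (lam0 k - w)).
  assert (hq : q < lam0 k) by (unfold q; apply Rmax_lub_lt; lra).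
  assert (Hup : forall l, q <= l -> l < lam0 k -> H l <= H l0).
  { intros l h1 h2.
    assert (hl0l : l0 <= l) by (pose proof (Rmax_l l0 (lam0 k - w)); unfold q in *; lra).
    assert (hlw : lam0 k - w <= l) by (pose proof (Rmax_r l0 (lam0 k - w)); unfold q in *; lra).
    pose proof (lt_lam0_U k l hk h2) as hU.
    assert (hU0 : 0 <= U k l) by (rewrite U_l0 by lra; fold l0; nra).
    assert (hUe : U k l = 1/4 - (8/k) * (lam0 k - l)) by (rewrite U_eq by lra; ring).
    pose proof (sqrt_half _ hU0 hU). pose proof (sqrt_pos (U k l)). pose proof (sqrt_sqrt _ hU0).
    set (s := sqrt (U k l)) in *.
    assert (hc : cos_pi_sqrt (U k l) <= eps).
    { rewrite cps_nonneg by lra. fold s.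
      rewrite <- sin_shift. replace (PI / 2 - PI * s) with (PI * (1/2 - s)) by field.
      assert (sin (PI * (1/2 - s)) <= PI * (1/2 - s)) by (apply sin_le_x; nra).
      assert (1/2 - s <= 2 * (1/4 - U k l)) by nra.
      assert ((8/k) * (lam0 k - l) <= (8/k) * w) by (apply Rmult_le_compat_l; lra).
      nra. }
    pose proof (cps_pos _ hU).
    assert (HK : K <= Lambda k l).
    { rewrite Lambda_eq. rewrite <- (ln_exp K) at 1. apply ln_le. apply exp_pos.
      assert (E : exp K = AA k / eps) by (unfold eps; rewrite exp_Ropp; field; split; [apply Rgt_not_eq, exp_pos| lra]).
      rewrite E. unfold Rdiv. apply Rmult_le_compat_l; [lra|]. apply Rinv_le_contravar; lra. }
    unfold K in HK. unfold H. assert (l * x <= lam0 k * x) by nra. unfold H in HK. lra. }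
  set (c := 8 * PI / (x * k)).
  assert (hc : 0 < c) by (unfold c; apply Rdiv_lt_0_compat; nra).
  assert (hcx : c * (x * k) = 8 * PI) by (unfold c; field; lra).
  set (p := l0 - k * (c * c) / 8).
  assert (hp : p < l0) by (unfold p; assert (0 < k * (c*c)) by nra; lra).
  assert (Hlo : forall l, l <= p -> H l <= H l0).
  { intros l h1.
    assert (hU : U k l < 0).
    { rewrite U_l0 by lra. fold l0. assert (l - l0 < 0) by lra. nra. }
    assert (hU' : 0 <= - U k l) by lra.
    pose proof (sqrt_pos (- U k l)). pose proof (sqrt_sqrt _ hU').
    set (s := sqrt (- U k l)) in *.
    assert (hss : l0 - l = (k / 8) * (s * s)).
    { rewrite H1, U_l0 by lra. fold l0. field. lra. }
    assert (hcs : c <= s).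
    { assert (c * c <= s * s).
      { assert ((k/8) * (c * c) <= (k/8) * (s*s)) by (unfold p in h1; lra).
        assert (0 < k / 8) by (apply Rdiv_lt_0_compat; lra). nra. }
      nra. }
    assert (hL : ln (AA k) - PI * s <= Lambda k l).
    { rewrite Lambda_eq, cps_neg by lra. fold s.
      pose proof (cosh_pos (PI * s)).
      rewrite ln_div by lra.
      assert (ln (cosh (PI * s)) <= PI * s).
      { rewrite <- (ln_exp (PI * s)) at 2. apply ln_le; auto. apply cosh_le_exp. nra. }
      lra. }
    unfold H. rewrite HL0.
    assert (PI * s <= (l0 - l) * x).
    { rewrite hss. assert (EPI : PI * s = c * (x * k) * s / 8) by (rewrite hcx; field).
      rewrite EPI. assert (0 < x * k) by nra. assert (0 <= (s - c) * s * (x*k)) by (apply Rmult_le_pos; [apply Rmult_le_pos|]; lra). nra. }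
    lra. }
  assert (hpq : p <= q) by (pose proof (Rmax_l l0 (lam0 k - w)); unfold q in *; lra).
  destruct (continuity_ab_maj H p q hpq) as [M [HM hMpq]].
  { intros c0 hc0. apply H_cont; auto. lra. }
  assert (Hl0M : H l0 <= H M).
  { apply HM. pose proof (Rmax_l l0 (lam0 k - w)). unfold q in *. lra. }
  exists M. split; [lra|].
  intros l hl. fold (H l). fold (H M).
  destruct (Rle_dec l p) as [h1|h1]. { pose proof (Hlo l h1). lra. }
  destruct (Rle_dec q l) as [h2|h2]. { pose proof (Hup l h2 hl). lra. }
  apply HM. lra.
Qed.


Lemma LStar_val k x m : IsMax k x m -> LambdaStar k x = m * x - Lambda k m.
Proof.
  intros [hm Hm].
  assert (Hl : is_lub (LStar_set k x) (m * x - Lambda k m)).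
  { split.
    - intros y [l [hl ->]]. apply Hm, hl.
    - intros b Hb. apply Hb. exists m. split; auto. }
  unfold LambdaStar. destruct (excluded_middle_informative _) as [e|n].
  - destruct (constructive_indefinite_description _ e) as [z hz]. simpl.
    apply (is_lub_u _ _ _ hz Hl).
  - exfalso. apply n. eexists; exact Hl.
Qed.

Lemma gamma_pos k nu m : 0 < nu -> IsMax k (1 / nu) m -> gamma k nu = m - nu * Lambda k m.
Proof.
  intros h hm. unfold gamma. destruct (Rlt_dec 0 nu); [|lra].
  rewrite (LStar_val k _ m hm). field. lra.
Qed.

Lemma gamma_zero k : gamma k 0 = lam0 k.
Proof. unfold gamma. destruct (Rlt_dec 0 0); [lra|reflexivity]. Qed.

Lemma side k nu m z : 8/3 < k < 8 -> 0 < nu -> IsMax k (1 / nu) m -> 0 <= z -> z <> nu ->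
  m - z * Lambda k m < gamma k z.
Proof.
  intros hk hnu hm hz hzn. destruct hm as [hm1 hm2].
  destruct (Req_dec z 0) as [->|hz0].
  - rewrite gamma_zero. lra.
  - assert (hzp : 0 < z) by lra.
    destruct (attain k (1 / z) hk) as [mz hmz]. { apply Rdiv_lt_0_compat; lra. }
    rewrite (gamma_pos k z mz hzp hmz).
    destruct hmz as [hmz1 hmz2].
    assert (h1 : m * (1/z) - Lambda k m <= mz * (1/z) - Lambda k mz) by (apply hmz2; auto).
    destruct (Rlt_le_dec (m - z * Lambda k m) (mz - z * Lambda k mz)) as [hlt|hge]; [exact hlt|].
    exfalso. apply hzn.
    assert (h2 : mz * (1/z) - Lambda k mz <= m * (1/z) - Lambda k m).
    { assert (E1 : mz * (1/z) - Lambda k mz = (mz - z * Lambda k mz) / z) by (field; lra).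
      assert (E2 : m * (1/z) - Lambda k m = (m - z * Lambda k m) / z) by (field; lra).
      rewrite E1, E2. unfold Rdiv. apply Rmult_le_compat_r; [apply Rlt_le, Rinv_0_lt_compat; lra| lra]. }
    assert (Hz : IsMax k (1/z) m).
    { split; auto. intros l hl. pose proof (hmz2 l hl). lra. }
    assert (Hn : IsMax k (1/nu) m) by (split; auto).
    pose proof (no_double k _ _ m hk Hz Hn).
    assert (E : z = 1 / (1 / z)) by (field; lra). rewrite E, H.
    field. lra.
Qed.

Theorem proposition2p7 (k : R) (hk : 8 / 3 < k < 8) :
  forall x y t : R, 0 <= x -> 0 <= y -> x <> y -> 0 < t < 1 ->
    gamma k (t * x + (1 - t) * y) < t * gamma k x + (1 - t) * gamma k y.
Proof.
  intros x y t hx hy hxy ht.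
  set (nu := t * x + (1 - t) * y).
  assert (hnu : 0 < nu).
  { unfold nu. destruct (Rtotal_order x y) as [h|[h|h]]; [nra|contradiction|nra]. }
  destruct (attain k (1 / nu) hk) as [m hm]. { apply Rdiv_lt_0_compat; lra. }
  rewrite (gamma_pos k nu m hnu hm).
  assert (hx' : x <> nu).
  { unfold nu. intro e. apply hxy. assert ((1 - t) * (x - y) = 0) by lra.
    apply Rmult_integral in H. lra. }
  assert (hy' : y <> nu).
  { unfold nu. intro e. apply hxy. assert (t * (x - y) = 0) by lra.
    apply Rmult_integral in H. lra. }
  pose proof (side k nu m x hk hnu hm hx hx') as Sx.
  pose proof (side k nu m y hk hnu hm hy hy') as Sy.
  assert (E : m - nu * Lambda k m = t * (m - x * Lambda k m) + (1 - t) * (m - y * Lambda k m)) by (unfold nu; ring).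
  rewrite E.
  assert (t * (m - x * Lambda k m) < t * gamma k x) by (apply Rmult_lt_compat_l; lra).
  assert ((1 - t) * (m - y * Lambda k m) < (1 - t) * gamma k y) by (apply Rmult_lt_compat_l; lra).
  lra.
Qed.
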